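(* Let $\mathcal G=(\mathcal V,\mathcal E,W)$ be a network, $h\in\mathbb{R}^{\mathcal V}$, and consider the SNC game with binary actions on $\mathcal G$ with external field $h$. Then: (i) the game is an exact potential game if and only if $\mathcal G$ is undirected. Moreover, if $\mathcal G$ is undirected, then: (ii) a function $\Phi:\mathcal X\to\mathbb{R}$ is an exact potential function for the game if and only if there exists a constant $C\in\mathbb{R}$ such that $\Phi(x)=\frac12\sum_{i,j\in\mathcal V}W_{ij}x_ix_j+\sum_{i\in\mathcal V}h_ix_i+C$ for all $x\in\mathcal X$; (iii) there exists a globally BR-stable set $\overline{\mathcal N}$ with $\arg\max_{x\in\mathcal X}\Phi(x)\subseteq\overline{\mathcal N}\subseteq\mathcal N$, where $\Phi(x)=\frac12\sum_{i,j}W_{ij}x_ix_j+\sum_ih_ix_i$ and $\mathcal N$ is the set of Nash equilibria.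
   Context: A network is a triple $\mathcal G=(\mathcal V,\mathcal E,W)$ where $\mathcal V$ is a finite nonempty set, $\mathcal E\subseteq\mathcal V\times\mathcal V$, and $W\in\mathbb{R}^{\mathcal V\times\mathcal V}$ has zero diagonal and satisfies $W_{ij}\neq0$ iff $(i,j)\in\mathcal E$ (weights may have either sign). It is undirected if $W=W^T$. The SNC game with binary actions on $\mathcal G$ with external field $h\in\mathbb{R}^{\mathcal V}$ has player set $\mathcal V$, action set $\{-1,+1\}$ for each player, strategy profiles $\mathcal X=\{\pm1\}^{\mathcal V}$, and utilities $u_i(x)=h_ix_i+x_i\sum_{j\in\mathcal V}W_{ij}x_j$. Best responses $\mathcal B_i(x_{-i})=\arg\max_{x_i\in\{\pm1\}}u_i(x_i,x_{-i})$; Nash equilibrium: $x^*_i\in\mathcal B_i(x^*_{-i})$ for all $i$. The game is exact potential with potential $\Phi:\mathcal X\to\mathbb{R}$ if $u_i(y)-u_i(x)=\Phi(y)-\Phi(x)$ whenever $x_{-i}=y_{-i}$. A BR-path of length $l\ge0$ from $x$ to $y$ is a sequence $x^{(0)}=x,\dots,x^{(l)}=y$ such that for each $k$ some player $i_k$ has $x^{(k)}_{-i_k}=x^{(k-1)}_{-i_k}$ and $x^{(k)}_{i_k}\in\mathcal B_{i_k}(x^{(k-1)}_{-i_k})\setminus\{x^{(k-1)}_{i_k}\}$. A set $\mathcal X^*\subseteq\mathcal X$ is globally BR-reachable if from every profile there is a BR-path to some element of $\mathcal X^*$; BR-invariant if there is no BR-path from an element of $\mathcal X^*$ to an element outside;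 globally BR-stable if both. *)

(* Defs.v *)
From HB Require Import structures.
From mathcomp Require Import all_boot all_order all_algebra.
From mathcomp Require Import reals.
Set Implicit Arguments. Unset Strict Implicit. Unset Printing Implicit Defensive.
Import Order.TTheory GRing.Theory Num.Theory.
Local Open Scope ring_scope.

Definition act (R : realType) (b : bool) : R := if b then 1 else -1.

(* Strategy profiles X = {+-1}^V, encoded as finite functions V -> bool. *)
Notation profile V := {ffun V -> bool}.

(* A network: weights W with zero diagonal (edges = nonzero entries). *)
Definition zero_diag (R : realType) (V : finType) (W : V -> V -> R) :=
  forall i, W i i = 0.

Definition undirected (R : realType) (V : finType) (W : V -> V -> R) :=
  forall i j, W i j = W j i.

Definition util (R : realType) (V : finType) (W : V -> V -> R) (h : V -> R)
  (i : V) (x : profile V) : R :=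
  h i * act R (x i) + act R (x i) * \sum_(j : V) W i j * act R (x j).

Definition upd (V : finType) (x : profile V) (i : V) (a : bool) : profile V :=
  [ffun j => if j == i then a else x j].

Definition best_resp (R : realType) (V : finType) (W : V -> V -> R) (h : V -> R)
  (i : V) (x : profile V) (a : bool) : Prop :=
  forall b : bool, util W h i (upd x i b) <= util W h i (upd x i a).

Definition nash (R : realType) (V : finType) (W : V -> V -> R) (h : V -> R)
  (x : profile V) : Prop :=
  forall i, best_resp W h i x (x i).

Definition is_exact_potential (R : realType) (V : finType) (W : V -> V -> R)
  (h : V -> R) (Phi : profile V -> R) : Prop :=
  forall (i : V) (x y : profile V), (forall j, j != i -> x j = y j) ->
    util W h i y - util W h i x = Phi y - Phi x.

Definition exact_potential_game (R : realType) (V : finType) (W : V -> V -> R)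
  (h : V -> R) : Prop :=
  exists Phi : profile V -> R, is_exact_potential W h Phi.

Definition br_step (R : realType) (V : finType) (W : V -> V -> R) (h : V -> R)
  (x y : profile V) : Prop :=
  exists i : V, (forall j, j != i -> y j = x j) /\
    best_resp W h i x (y i) /\ y i != x i.

Inductive br_path (R : realType) (V : finType) (W : V -> V -> R) (h : V -> R)
  : profile V -> profile V -> Prop :=
| br_path_nil x : br_path W h x x
| br_path_cons x y z : br_step W h x y -> br_path W h y z -> br_path W h x z.

Definition globally_BR_reachable (R : realType) (V : finType) (W : V -> V -> R)
  (h : V -> R) (S : {set profile V}) : Prop :=
  forall x, exists2 y, y \in S & br_path W h x y.

Definition BR_invariant (R : realType) (V : finType) (W : V -> V -> R)
  (h : V -> R) (S : {set profile V}) : Prop :=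
  forall x y, x \in S -> br_path W h x y -> y \in S.

Definition globally_BR_stable (R : realType) (V : finType) (W : V -> V -> R)
  (h : V -> R) (S : {set profile V}) : Prop :=
  globally_BR_reachable W h S /\ BR_invariant W h S.

Definition Phi0 (R : realType) (V : finType) (W : V -> V -> R) (h : V -> R)
  (x : profile V) : R :=
  2^-1 * (\sum_(i : V) \sum_(j : V) W i j * act R (x i) * act R (x j))
  + \sum_(i : V) h i * act R (x i).

Definition is_argmax (R : realType) (V : finType) (f : profile V -> R)
  (x : profile V) : Prop :=
  forall y, f y <= f x.

(* Main.v *)
Require Import Defs.
From HB Require Import structures.
From mathcomp Require Import all_boot all_order all_algebra.
From mathcomp Require Import reals.
From mathcomp Require Import ring lra.
From Stdlib Require Import Classical ClassicalEpsilon.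
Import Order.TTheory GRing.Theory Num.Theory.
Local Open Scope ring_scope.
Set Implicit Arguments. Unset Strict Implicit.

Section S.
Variables (R : realType) (V : finType) (W : V -> V -> R) (h : V -> R).
Hypothesis HW : zero_diag W.

Definition G (i : V) (x : profile V) : R :=
  2^-1 * (\sum_(j | j != i) \sum_(k | k != i) W j k * act R (x j) * act R (x k))
  + \sum_(j | j != i) h j * act R (x j).

Lemma Phi0_split (Hs : undirected W) i x :
  Phi0 W h x = util W h i x + G i x.
Proof.
rewrite /Phi0 /util /G.
set S := \sum_(k : V) W i k * act R (x k).
have ES : S = \sum_(k | k != i) W i k * act R (x k).
  by rewrite /S (bigD1 i) //= HW mul0r add0r.
rewrite [\sum_(j : V) h j * _](bigD1 i) //=.
rewrite (bigD1 i) //=.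
have E1 : \sum_(k : V) W i k * act R (x i) * act R (x k) = act R (x i) * S.
  by rewrite /S mulr_sumr; apply: eq_bigr => k _; ring.
have E2 : \sum_(j | j != i) \sum_(k : V) W j k * act R (x j) * act R (x k)
   = act R (x i) * S + \sum_(j | j != i) \sum_(k | k != i) W j k * act R (x j) * act R (x k).
  rewrite ES mulr_sumr -big_split /=; apply: eq_bigr => j Hj.
  by rewrite (bigD1 i) //= Hs; congr (_ + _); ring.
rewrite E1 E2.
set Q := \sum_(j | j != i) _.
set H := \sum_(j | j != i) _.
by field.
Qed.

Lemma G_eq i (x y : profile V) : (forall j, j != i -> x j = y j) -> G i x = G i y.
Proof.
move=> H; rewrite /G; congr (_ * _ + _).
  apply: eq_bigr => j Hj; apply: eq_bigr => k Hk; by rewrite !H.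
by apply: eq_bigr => j Hj; rewrite H.
Qed.

Lemma Phi0_pot (Hs : undirected W) : is_exact_potential W h (Phi0 W h).
Proof.
move=> i x y H; rewrite (Phi0_split Hs i x) (Phi0_split Hs i y) (G_eq H); ring.
Qed.

Lemma br_path_trans x y z : br_path W h x y -> br_path W h y z -> br_path W h x z.
Proof.
elim=> [//|a b c Hab _ IH] Hcz; apply: br_path_cons Hab _; exact: IH.
Qed.

Lemma upd_same (x : profile V) i : upd x i (x i) = x.
Proof. by apply/ffunP => k; rewrite ffunE; case: eqP => // ->. Qed.

Lemma step_mono (Hs : undirected W) x y : br_step W h x y -> Phi0 W h x <= Phi0 W h y.
Proof.
case=> i [Hy [Hb _]].
have Eu : upd x i (y i) = y.
  apply/ffunP => k; rewrite ffunE; case: eqP => [->//|/eqP Hk]; by rewrite Hy.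
have := Hb (x i); rewrite Eu upd_same => Hle.
have := @Phi0_pot Hs i x y.
move=> P; rewrite -subr_ge0 -P; first by rewrite subr_ge0.
by move=> j Hj; rewrite Hy.
Qed.

Lemma path_mono (Hs : undirected W) x y : br_path W h x y -> Phi0 W h x <= Phi0 W h y.
Proof.
elim=> [//|a b c Hab _ IH]; apply: le_trans IH; exact: step_mono.
Qed.

Lemma not_nash_step (Hs : undirected W) z : ~ nash W h z ->
  exists z', br_step W h z z' /\ Phi0 W h z < Phi0 W h z'.
Proof.
move=> Hn; apply: NNPP => Hc; apply: Hn => i b.
rewrite upd_same; rewrite leNgt; apply/negP => Hlt.
have Hb : b = ~~ z i.
  case: (eqVneq b (z i)) => [Eb|]; first by rewrite Eb upd_same ltxx in Hlt.
  by move: Hlt; case: b; case: (z i).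
subst b; apply: Hc; exists (upd z i (~~ z i)); split.
  exists i; split; first by move=> j Hj; rewrite ffunE (negbTE Hj).
  split; last by rewrite ffunE eqxx; case: (z i).
  move=> b; rewrite ffunE eqxx; case: (boolP (b == z i)) => [/eqP ->|].
    by rewrite upd_same ltW.
  by move: Hlt; case: b; case: (z i).
have P := @Phi0_pot Hs i z (upd z i (~~ z i)).
rewrite -subr_gt0 -P ?subr_gt0 //.
by move=> j Hj; rewrite ffunE (negbTE Hj).
Qed.

End S.

Theorem proposition1 (R : realType) (V : finType) (W : V -> V -> R) (h : V -> R)
  (HV : (0 < #|V|)%N) (HW : zero_diag W) :
  (exact_potential_game W h <-> undirected W) /\
  (undirected W ->
    (forall Phi : profile V -> R,
       is_exact_potential W h Phi <->
       exists C : R, forall x, Phi x = Phi0 W h x + C) /\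
    (exists Nbar : {set profile V},
       globally_BR_stable W h Nbar /\
       (forall x, is_argmax (Phi0 W h) x -> x \in Nbar) /\
       (forall x, x \in Nbar -> nash W h x))).
Proof.
pose x0 : profile V := [ffun=> true].
split.
  split; last by move=> Hs; exists (Phi0 W h); exact: Phi0_pot.
  case=> Phi HP i j; case: (eqVneq i j) => [->//|Hij].
  have Hji : j != i by rewrite eq_sym.
  pose q a b := upd (upd x0 i a) j b.
  have qE a b k : q a b k = if k == j then b else if k == i then a else true.
    by rewrite /q !ffunE.
  have qi a a' b k : k != i -> q a b k = q a' b k.
    by move=> Hk; rewrite !qE (negbTE Hk).
  have qj a b b' k : k != j -> q a b k = q a b' k.
    by move=> Hk; rewrite !qE (negbTE Hk).
  set ci := \sum_(k | k != j) W i k * act R (q true true k).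
  set cj := \sum_(k | k != i) W j k * act R (q true true k).
  have Ui a b : util W h i (q a b) = h i * act R a + act R a * (W i j * act R b + ci).
    rewrite /util (bigD1 j) //= !qE eqxx (negbTE Hij) eqxx; congr (_ + _ * (_ + _)).
    apply: eq_bigr => k Hk; case: (eqVneq k i) => [->|Hki]; first by rewrite HW !mul0r.
    by rewrite !qE (negbTE Hk) (negbTE Hki).
  have Uj a b : util W h j (q a b) = h j * act R b + act R b * (W j i * act R a + cj).
    rewrite /util (bigD1 i) //= !qE eqxx (negbTE Hij) eqxx; congr (_ + _ * (_ + _)).
    apply: eq_bigr => k Hk; case: (eqVneq k j) => [->|Hkj]; first by rewrite HW !mul0r.
    by rewrite !qE (negbTE Hk) (negbTE Hkj).
  have e1 := HP i (q true true) (q false true) (qi _ _ _).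
  have e2 := HP j (q false true) (q false false) (qj _ _ _).
  have e3 := HP i (q false false) (q true false) (qi _ _ _).
  have e4 := HP j (q true false) (q true true) (qj _ _ _).
  move: e1 e2 e3 e4; rewrite !Ui !Uj /act => e1 e2 e3 e4.
  lra.
move=> Hs; split.
  move=> Phi; split; last first.
    case=> C HC i x y Hxy; rewrite !HC (@Phi0_pot _ _ _ _ HW Hs _ _ _ Hxy); ring.
  move=> HP.
  pose D x := Phi x - Phi0 W h x.
  have Dstep (i : V) (x y : profile V) : (forall j, j != i -> x j = y j) -> D y = D x.
    move=> H; rewrite /D.
    have := HP i x y H; rewrite (@Phi0_pot _ _ _ _ HW Hs _ _ _ H) => E.
    lra.
  have Ds (s : seq V) : forall x : profile V, (forall k, k \notin s -> x k = true) -> D x = D x0.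
    elim: s => [|k s IH] x Hx.
      by congr D; apply/ffunP => k; rewrite ffunE Hx.
    pose x' := upd x k true.
    have -> : D x = D x'.
      symmetry; apply: (Dstep k) => j Hj; by rewrite ffunE (negbTE Hj).
    apply: IH => k' Hk'; rewrite ffunE; case: eqP => // /eqP Hne.
    by apply: Hx; rewrite inE negb_or Hne Hk'.
  exists (D x0) => x; rewrite -(Ds (enum V) x); first by rewrite /D; ring.
  by move=> k; rewrite mem_enum.
pose P x := forall z, br_path W h x z -> nash W h z.
pose Nbar := [set x | if excluded_middle_informative (P x) then true else false].
have NbE x : x \in Nbar <-> P x.
  by rewrite inE; case: excluded_middle_informative.
exists Nbar; split; [split|split].
- pose S x := [set z | Phi0 W h x < Phi0 W h z].
  suff H : forall n x, (#|S x| < n)%N -> exists2 y, y \in Nbar & br_path W h x y.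
    by move=> x; apply: (H #|S x|.+1).
  elim=> [//|n IH] x Hn.
  case: (classic (P x)) => HPx; first by exists x; [apply/NbE | constructor].
  have [z Hz] := not_all_ex_not _ _ HPx.
  have [Hpz Hnz] := imply_to_and _ _ Hz.
  have [z' [Hst Hlt]] := not_nash_step HW Hs Hnz.
  have Hxz := path_mono HW Hs Hpz.
  have Hpr : S z' \proper S x.
    apply/properP; split.
      apply/subsetP => w; rewrite !inE => Hw.
      by apply: le_lt_trans Hxz (lt_trans Hlt Hw).
    by exists z'; rewrite !inE ?ltxx //; apply: le_lt_trans Hxz Hlt.
  have := proper_card Hpr => Hc.
  have [y Hy Hp] := IH z' (leq_trans Hc Hn).
  exists y => //; apply: br_path_trans Hpz _; exact: br_path_cons Hst Hp.
- move=> x y /NbE Hx Hxy; apply/NbE => z Hz; apply: Hx; exact: br_path_trans Hxy Hz.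
- move=> x Hmax; apply/NbE => z Hz i b.
  have Hzm : forall y, Phi0 W h y <= Phi0 W h z.
    by move=> y; apply: le_trans (Hmax y) (path_mono HW Hs Hz).
  rewrite upd_same -subr_ge0 (@Phi0_pot _ _ _ _ HW Hs i (upd z i b) z).
    by rewrite subr_ge0.
  by move=> j Hj; rewrite ffunE (negbTE Hj).
- move=> x /NbE Hx; apply: Hx; constructor.
Qed.
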